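(* Let $D_n=\sum_{k=0}^n\binom{n}{k}^2\binom{2k}{k}\binom{2(n-k)}{n-k}$ for $n\ge 0$ (the Domb numbers). Then the ratio sequence $\{D_{n+1}/D_n\}_{n\ge 0}$ is ratio log-convex, i.e. the sequence $\{y_n\}_{n\ge0}$ with $y_n=\frac{D_{n+2}D_n}{D_{n+1}^2}$ satisfies $y_{n-1}y_{n+1}\ge y_n^2$ for all $n\ge 1$.
   Context: A sequence $\{x_n\}$ of positive numbers is log-convex if $x_{n-1}x_{n+1}\ge x_n^2$ for all $n\ge1$; it is called ratio log-convex if $\{x_{n+1}/x_n\}$ is log-convex. *)

(* Defs.v *)
From mathcomp Require Import all_boot all_order all_algebra.
Set Implicit Arguments. Unset Strict Implicit. Unset Printing Implicit Defensive.
Import Order.TTheory GRing.Theory Num.Theory.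
Local Open Scope ring_scope.

Definition domb (n : nat) : nat :=
  (\sum_(0 <= k < n.+1) 'C(n, k) ^ 2 * 'C(2 * k, k) * 'C(2 * (n - k), n - k))%N.

Definition domb_y (n : nat) : rat :=
  ((domb n.+2)%:R * (domb n)%:R) / ((domb n.+1)%:R ^+ 2).

(* Main.v *)
Require Import Defs.
From mathcomp Require Import all_boot all_order all_algebra.
Import Order.TTheory GRing.Theory Num.Theory.
From mathcomp Require Import zify.
Local Open Scope ring_scope.

Module PartB.
From Stdlib Require Import Reals Lra Psatz Arith Lia.
Local Close Scope ring_scope. Local Open Scope R_scope.
Ltac hpos := repeat (apply Rplus_le_le_0_compat || apply Rmult_le_pos); lra.
Definition P_up_def (x : R) := 960 + x * (576).
Lemma P_up : forall x : R, 0 <= x -> 0 <= P_up_def x.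
Proof.
  intros x Hx. unfold P_up_def. replace (960 + x * (576)) with (960 + (x - 0) * (576 + (x - 0) * (0))) by ring.
  assert (Hm : 0 <= x - 0) by lra.
  generalize (x - 0) Hm; intros m Hm'; hpos.
Qed.

Definition P_low_def (x : R) := (-35712) + x * ((-111456) + x * ((-174304) + x * ((-197632) + x * ((-179328) + x * ((-105120) + x * ((-26592) + x * (2624 + x * (2240 + x * (192))))))))).
Lemma P_low : forall x : R, 5 <= x -> 0 <= P_low_def x.
Proof.
  intros x Hx. unfold P_low_def. replace ((-35712) + x * ((-111456) + x * ((-174304) + x * ((-197632) + x * ((-179328) + x * ((-105120) + x * ((-26592) + x * (2624 + x * (2240 + x * (192)))))))))) with (569265408 + (x - 5) * (1428559104 + (x - 5) * (1281462016 + (x - 5) * (604855808 + (x - 5) * (172300672 + (x - 5) * (31274720 + (x - 5) * (3649248 + (x - 5) * (265024 + (x - 5) * (10880 + (x - 5) * (192 + (x - 5) * (0))))))))))) by ring.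
  assert (Hm : 0 <= x - 5) by lra.
  generalize (x - 5) Hm; intros m Hm'; hpos.
Qed.

Definition P_fin_def (x : R) := (-12607488000) + x * ((-100506009600) + x * ((-350921687040) + x * ((-715681431552) + x * ((-956379693056) + x * ((-862169071616) + x * ((-404746141696) + x * (296300314624 + x * (947617005568 + x * (1192110850048 + x * (943515500544 + x * (423131873280 + x * ((-99730063360) + x * ((-412933423104) + x * ((-422015139840) + x * ((-244081229824) + x * ((-80714137600) + x * ((-11146362880) + x * (1568669696 + x * (788529152 + x * (83886080)))))))))))))))))))).
Lemma P_fin : forall x : R, 6 <= x -> 0 <= P_fin_def x.
Proof.
  intros x Hx. unfold P_fin_def. replace ((-12607488000) + x * ((-100506009600) + x * ((-350921687040) + x * ((-715681431552) + x * ((-956379693056) + x * ((-862169071616) + x * ((-404746141696) + x * (296300314624 + x * (947617005568 + x * (1192110850048 + x * (943515500544 + x * (423131873280 + x * ((-99730063360) + x * ((-412933423104) + x * ((-422015139840) + x * ((-244081229824) + x * ((-80714137600) + x * ((-11146362880) + x * (1568669696 + x * (788529152 + x * (83886080))))))))))))))))))))) with (376918345437188834525184 + (x - 6) * (1504282283451214077100032 + (x - 6) * (2676294648785772255117312 + (x - 6) * (2887127736123859726761984 + (x - 6) * (2144108407873452921585664 + (x - 6) * (1173784779583248250961920 + (x - 6) * (493839737380393201958912 + (x - 6) * (164041851328760771510272 + (x - 6) * (43796554912529130717184 + (x - 6) * (9507207386358078767104 + (x - 6) * (1689399091016514404352 + (x - 6) * (246423608173837418496 + (x - 6) * (29477785523902742528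 + (x - 6) * (2877967230019043328 + (x - 6) * (227209451028873216 + (x - 6) * (14288168192835584 + (x - 6) * (699195657814016 + (x - 6) * (25668563763200 + (x - 6) * (665241780224 + (x - 6) * (10854858752 + (x - 6) * (83886080 + (x - 6) * (0)))))))))))))))))))))) by ring.
  assert (Hm : 0 <= x - 6) by lra.
  generalize (x - 6) Hm; intros m Hm'; hpos.
Qed.

Definition P_Lpos_def (x : R) := (-49) + x * ((-32) + x * (0 + x * (0 + x * (0 + x * (32))))).
Lemma P_Lpos : forall x : R, 2 <= x -> 0 <= P_Lpos_def x.
Proof.
  intros x Hx. unfold P_Lpos_def. replace ((-49) + x * ((-32) + x * (0 + x * (0 + x * (0 + x * (32)))))) with (911 + (x - 2) * (2528 + (x - 2) * (2560 + (x - 2) * (1280 + (x - 2) * (320 + (x - 2) * (32 + (x - 2) * (0))))))) by ring.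
  assert (Hm : 0 <= x - 2) by lra.
  generalize (x - 2) Hm; intros m Hm'; hpos.
Qed.
Definition Ub (x:R) := 16 - 48/(2*x+3).
Definition Lb (x:R) := 16 - 48/(2*x+3) - 16/(x^4).
Definition ar (x:R) := 2*(2*x+3)*(5*x^2+15*x+12).
Definition br (x:R) := 64*(x+1)^3.
Definition cr (x:R) := (x+2)^3.

Lemma pos_of (E D N : R) : 0 < D -> E * D = N -> 0 <= N -> 0 <= E.
Proof. intros HD HE HN. destruct (Rle_or_lt 0 E) as [h|h]; auto. nra. Qed.

Lemma Ub_pos x : 1 <= x -> 0 < Ub x.
Proof.
  intros Hx. unfold Ub.
  assert (H: 16 - 48/(2*x+3) = 32*x/(2*x+3)) by (field; lra).
  rewrite H. apply Rdiv_lt_0_compat; lra.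
Qed.

Lemma Lb_pos x : 2 <= x -> 0 < Lb x.
Proof.
  intros Hx. unfold Lb.
  assert (H: 16 - 48/(2*x+3) - 16/x^4 = (32*x^5-32*x-48)/((2*x+3)*x^4)).
  { field. repeat split; lra. }
  rewrite H. apply Rdiv_lt_0_compat.
  - pose proof (P_Lpos x Hx). unfold P_Lpos_def in *. nra.
  - apply Rmult_lt_0_compat; [lra|]. apply pow_lt; lra.
Qed.

Lemma up_alg x : 0 <= x -> ar x * Ub x - br x <= cr x * Ub x * Ub (x+1).
Proof.
  intros Hx.
  assert (0 <= cr x * Ub x * Ub (x+1) - (ar x * Ub x - br x)); [|lra].
  apply (pos_of _ ((2*x+3)*(2*x+5)) (P_up_def x)).
  - nra.
  - unfold cr, ar, br, Ub, P_up_def. field. lra.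
  - apply P_up; lra.
Qed.

Lemma low_alg x : 5 <= x -> cr x * Lb x * Lb (x+1) <= ar x * Lb x - br x.
Proof.
  intros Hx.
  assert (0 <= ar x * Lb x - br x - cr x * Lb x * Lb (x+1)); [|lra].
  apply (pos_of _ (((2*x+3)*x^4)*((2*(x+1)+3)*(x+1)^4)) (P_low_def x)).
  - apply Rmult_lt_0_compat; apply Rmult_lt_0_compat; try lra; apply pow_lt; lra.
  - unfold cr, ar, br, Lb, P_low_def. field. repeat split; lra.
  - apply P_low; lra.
Qed.

Lemma fin_alg x : 6 <= x ->
  Ub (x-1) * (Ub (x+1) * Ub (x+1) * Ub (x+1)) <= Lb x * Lb x * Lb x * Lb (x+2).
Proof.
  intros Hx.
  assert (0 <= Lb x * Lb x * Lb x * Lb (x+2) - Ub (x-1) * (Ub (x+1) * Ub (x+1) * Ub (x+1))); [|lra].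
  apply (pos_of _ (((2*x+3)*x^4)^3*((2*(x+2)+3)*(x+2)^4) * ((2*(x-1)+3)*(2*(x+1)+3)^3)) (P_fin_def x)).
  - repeat apply Rmult_lt_0_compat; try lra; repeat apply pow_lt; try lra;
    repeat apply Rmult_lt_0_compat; try lra; apply pow_lt; lra.
  - unfold Lb, Ub, P_fin_def. field. repeat split; lra.
  - apply P_fin; lra.
Qed.
Definition recR (d : nat -> R) := forall n : nat,
  (INR n+2)^3 * d (S (S n)) + 64*(INR n+1)^3 * d n
  = 2*(2*INR n+3)*(5*INR n^2+15*INR n+12) * d (S n).

Lemma r_step d (Hp : forall n, 0 < d n) (Hr : recR d) n :
  cr (INR n) * (d (S (S n)) / d (S n)) = ar (INR n) - br (INR n) / (d (S n) / d n).
Proof.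
  pose proof (Hp n). pose proof (Hp (S n)). pose proof (pos_INR n).
  specialize (Hr n).
  assert (E : d (S (S n)) = (2*(2*INR n+3)*(5*INR n^2+15*INR n+12) * d (S n) - 64*(INR n+1)^3 * d n) / (INR n+2)^3).
  { field_simplify_eq; [lra|]. lra. }
  rewrite E. unfold cr, ar, br. field. repeat split; lra.
Qed.

Lemma upper d (Hp : forall n, 0 < d n) (Hr : recR d) (H2 : d 3%nat / d 2%nat <= Ub 2) :
  forall k, d (S (S (S k))) / d (S (S k)) <= Ub (INR (S (S k))).
Proof.
  induction k as [|k IH]. { simpl INR. replace (0+1+1) with 2 by ring. exact H2. }
  set (n := S (S k)) in *. set (x := INR n).
  assert (Hx : 2 <= x). { unfold x, n. rewrite !S_INR. pose proof (pos_INR k). lra. }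
  pose proof (r_step d Hp Hr n) as St. fold x in St.
  change (S (S (S k))) with (S n) in IH. fold x in IH.
  change (S (S (S (S k)))) with (S (S n)). rewrite S_INR. fold x.
  set (r := d (S n) / d n) in *. set (r' := d (S (S n)) / d (S n)) in *.
  assert (Hr0 : 0 < r) by (unfold r; apply Rdiv_lt_0_compat; auto).
  assert (HU : 0 < Ub x) by (apply Ub_pos; lra).
  assert (Hc : 0 < cr x) by (unfold cr; apply pow_lt; lra).
  assert (Hb : 0 <= br x) by (unfold br; apply Rmult_le_pos; [lra|apply pow_le; lra]).
  assert (h1 : br x / Ub x <= br x / r).
  { unfold Rdiv. apply Rmult_le_compat_l; auto. apply Rinv_le_contravar; auto. }
  assert (h2 : ar x - br x / Ub x <= cr x * Ub (x+1)).
  { pose proof (up_alg x ltac:(lra)) as U.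
    assert (ar x - br x / Ub x = (ar x * Ub x - br x) / Ub x) by (field; lra).
    assert (cr x * Ub (x+1) = (cr x * Ub x * Ub (x+1)) / Ub x) by (field; lra).
    rewrite H H0. unfold Rdiv. apply Rmult_le_compat_r; auto. left; apply Rinv_0_lt_compat; auto. }
  assert (cr x * r' <= cr x * Ub (x+1)) by lra.
  apply Rmult_le_reg_l with (cr x); auto.
Qed.

Lemma lower d (Hp : forall n, 0 < d n) (Hr : recR d) (H5 : Lb 5 <= d 6%nat / d 5%nat) :
  forall k, Lb (INR (5 + k)) <= d (S (5 + k)) / d (5 + k)%nat.
Proof.
  induction k as [|k IH]. { replace (INR (5+0)) with 5 by (simpl; ring). exact H5. }
  replace (5 + S k)%nat with (S (5 + k)) by lia.
  set (n := (5 + k)%nat) in *. set (x := INR n).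
  assert (Hx : 5 <= x). { unfold x, n. rewrite plus_INR. pose proof (pos_INR k). simpl INR. lra. }
  pose proof (r_step d Hp Hr n) as St. fold x in St, IH.
  rewrite S_INR. fold x.
  set (r := d (S n) / d n) in *. set (r' := d (S (S n)) / d (S n)) in *.
  assert (HL : 0 < Lb x) by (apply Lb_pos; lra).
  assert (Hr0 : 0 < r) by lra.
  assert (Hc : 0 < cr x) by (unfold cr; apply pow_lt; lra).
  assert (Hb : 0 <= br x) by (unfold br; apply Rmult_le_pos; [lra|apply pow_le; lra]).
  assert (h1 : br x / r <= br x / Lb x).
  { unfold Rdiv. apply Rmult_le_compat_l; auto. apply Rinv_le_contravar; auto. }
  assert (h2 : cr x * Lb (x+1) <= ar x - br x / Lb x).
  { pose proof (low_alg x ltac:(lra)) as U.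
    assert (ar x - br x / Lb x = (ar x * Lb x - br x) / Lb x) by (field; lra).
    assert (cr x * Lb (x+1) = (cr x * Lb x * Lb (x+1)) / Lb x) by (field; lra).
    rewrite H H0. unfold Rdiv. apply Rmult_le_compat_r; auto. left; apply Rinv_0_lt_compat; auto. }
  assert (cr x * Lb (x+1) <= cr x * r') by lra.
  apply Rmult_le_reg_l with (cr x); auto.
Qed.
Lemma cube_le a b : 0 <= a -> a <= b -> a*a*a <= b*b*b.
Proof. intros. assert (a*a <= b*b) by nra. nra. Qed.

Lemma mainR d (Hp : forall n, 0 < d n) (Hr : recR d) (H0 : d 0%nat = 1) (H1 : d 1%nat = 4) :
  forall k, d (S k) ^ 4 * d (S (S (S k))) ^ 4 <= d k * d (S (S (S (S k)))) * d (S (S k)) ^ 6.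
Proof.
  assert (E2 : d 2%nat = 28). { pose proof (Hr 0%nat) as h. simpl INR in h. lra. }
  assert (E3 : d 3%nat = 256). { pose proof (Hr 1%nat) as h. simpl INR in h. lra. }
  assert (E4 : d 4%nat = 2716). { pose proof (Hr 2%nat) as h. simpl INR in h. lra. }
  assert (E5 : d 5%nat = 31504). { pose proof (Hr 3%nat) as h. simpl INR in h. lra. }
  assert (E6 : d 6%nat = 387136). { pose proof (Hr 4%nat) as h. simpl INR in h. lra. }
  assert (E7 : d 7%nat = 4951552). { pose proof (Hr 5%nat) as h. simpl INR in h. lra. }
  assert (E8 : d 8%nat = 65218204). { pose proof (Hr 6%nat) as h. simpl INR in h. lra. }
  intros k.
  destruct (le_lt_dec 5 k) as [Hk|Hk].
  2:{ destruct k as [|[|[|[|[|k]]]]]; try lia;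
      rewrite ?H0 ?H1 ?E2 ?E3 ?E4 ?E5 ?E6 ?E7 ?E8; lra. }
  assert (HU := upper d Hp Hr ltac:(rewrite E3 E2; unfold Ub; lra)).
  assert (HL := lower d Hp Hr ltac:(rewrite E6 E5; unfold Lb; lra)).
  destruct k as [|[|k]]; try lia.
  pose proof (HU k) as U0. pose proof (HU (S (S k))) as U2.
  destruct (Nat.le_exists_sub 5 (S (S k)) Hk) as [j [Hj _]].
  pose proof (HL (S j)) as L1. pose proof (HL (S (S (S j)))) as L3.
  replace (5 + S j)%nat with (S (S (S k))) in L1 by lia.
  replace (5 + S (S (S j)))%nat with (S (S (S (S (S k))))) in L3 by lia.
  set (x := INR (S (S (S k)))).
  assert (Hx : 6 <= x). { unfold x. rewrite !S_INR. pose proof (pos_INR k).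
     assert (INR k >= 3). { destruct k as [|[|[|k]]]; try lia. rewrite !S_INR. pose proof (pos_INR k). lra. } lra. }
  replace (INR (S (S k))) with (x - 1) in U0 by (unfold x; rewrite (S_INR (S (S k))); ring).
  replace (INR (S (S (S (S k))))) with (x + 1) in U2 by (unfold x; rewrite (S_INR (S (S (S k)))); ring).
  replace (INR (S (S (S (S (S k)))))) with (x + 2) in L3 by (unfold x; rewrite !S_INR; ring).
  fold x in L1.
  pose proof (fin_alg x Hx) as F.
  set (a := d (S (S k))) in *. set (b := d (S (S (S k)))) in *. set (c := d (S (S (S (S k))))) in *.
  set (e := d (S (S (S (S (S k)))))) in *. set (g := d (S (S (S (S (S (S k))))))) in *.
  assert (Ha : 0 < a) by apply Hp. assert (Hb : 0 < b) by apply Hp. assert (Hc : 0 < c) by apply Hp.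
  assert (He : 0 < e) by apply Hp. assert (Hg : 0 < g) by apply Hp.
  assert (HU1 : 0 < Ub (x-1)) by (apply Ub_pos; lra).
  assert (HU3 : 0 < Ub (x+1)) by (apply Ub_pos; lra).
  assert (HL1 : 0 < Lb x) by (apply Lb_pos; lra).
  assert (HL3 : 0 < Lb (x+2)) by (apply Lb_pos; lra).
  assert (I1 : b/a * (e/c*(e/c)*(e/c)) <= Ub (x-1) * (Ub (x+1) * Ub (x+1) * Ub (x+1))).
  { assert (0 < e/c) by (apply Rdiv_lt_0_compat; auto).
    assert (0 < b/a) by (apply Rdiv_lt_0_compat; auto).
    assert (H3 : 0 <= e/c*(e/c)*(e/c)) by (apply Rmult_le_pos; [apply Rmult_le_pos|]; lra).
    apply Rmult_le_compat; try lra. apply cube_le; lra. }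
  assert (I2 : Lb x * Lb x * Lb x * Lb (x+2) <= c/b*(c/b)*(c/b) * (g/e)).
  { assert (H3 : 0 <= Lb x * Lb x * Lb x) by (apply Rmult_le_pos; [apply Rmult_le_pos|]; lra).
    apply Rmult_le_compat; try lra. apply cube_le; lra. }
  assert (I : b/a * (e/c*(e/c)*(e/c)) * (a*c^3*(b^3*e)) <= c/b*(c/b)*(c/b) * (g/e) * (a*c^3*(b^3*e))).
  { apply Rmult_le_compat_r; [|lra].
    apply Rlt_le. repeat (apply Rmult_lt_0_compat || apply pow_lt); lra. }
  replace (b/a * (e/c*(e/c)*(e/c)) * (a*c^3*(b^3*e))) with (b^4*e^4) in I by (field; lra).
  replace (c/b*(c/b)*(c/b) * (g/e) * (a*c^3*(b^3*e))) with (a*g*c^6) in I by (field; lra).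
  lra.
Qed.
End PartB.

From mathcomp Require Import ring lra zify.
Set Implicit Arguments. Unset Strict Implicit. Unset Printing Implicit Defensive.
Definition fD (n k : nat) : nat := ('C(n, k) ^ 2 * 'C(2 * k, k) * 'C(2 * (n - k), n - k))%N.

Lemma cbin j : ('C(2 * j.+1, j.+1) * j.+1 = 2 * (2 * j + 1) * 'C(2 * j, j))%N.
Proof.
  have h1 := mul_bin_diag (2 * j).+2 j.
  have h2 := mul_bin_diag (2 * j).+1 j.
  have h3 : 'C((2 * j).+1, j.+1) = 'C((2 * j).+1, j).
    have hs : (j <= (2 * j).+1)%N by lia.
    rewrite -(bin_sub hs); congr 'C(_, _); lia.
  have e : (2 * j.+1 = (2 * j).+2)%N by lia.
  rewrite e; simpl in h1, h2; rewrite h3 in h2.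
  nia.
Qed.

Lemma test (a b c : rat) : a * b = c -> b * a + 1 = c + 1.
Proof. move=> H. lra. Qed.

Lemma row_nat k j : (j.+1 ^ 3 * fD (k + j).+1 k = 2 * (k + j).+1 ^ 2 * (2 * j + 1) * fD (k + j) k)%N.
Proof.
  rewrite /fD.
  have e1 : ((k + j).+1 - k = j.+1)%N by lia.
  have e2 : ((k + j) - k = j)%N by lia.
  rewrite e1 e2.
  have h1 := mul_bin_down (k + j).+1 k. rewrite e1 /= in h1.
  have h2 := cbin j.
  set X := 'C((k + j).+1, k) in h1 *. set Y := 'C(k + j, k) in h1 *.
  set B := 'C(2 * j.+1, j.+1) in h2 *. set Z := 'C(2 * j, j) in h2 *. set Cc := 'C(2 * k, k).
  have -> : (j.+1 ^ 3 * (X ^ 2 * Cc * B) = (j.+1 * X) ^ 2 * Cc * (B * j.+1))%N by ring.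
  rewrite -h1 h2. ring.
Qed.

Lemma col_nat k j : ((k.+1) ^ 3 * (2 * j + 1) * fD (k + j.+1) k.+1 = (j.+1) ^ 3 * (2 * k + 1) * fD (k + j.+1) k)%N.
Proof.
  rewrite /fD.
  have e1 : ((k + j.+1) - k.+1 = j)%N by lia.
  have e2 : ((k + j.+1) - k = j.+1)%N by lia.
  rewrite e1 e2.
  have h1 := mul_bin_left (k + j.+1) k. rewrite e2 in h1.
  have h2 := cbin k. have h3 := cbin j.
  have e3 : (2 * k.+1 = (2 * k.+1))%N by [].
  set X := 'C(k + j.+1, k.+1) in h1 *. set Y := 'C(k + j.+1, k) in h1 *.
  set B := 'C(2 * j.+1, j.+1) in h3 *. set Z := 'C(2 * j, j) in h3 *.
  set Bk := 'C(2 * k.+1, k.+1) in h2 *. set Zk := 'C(2 * k, k) in h2 *.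
  have -> : (k.+1 ^ 3 * (2 * j + 1) * (X ^ 2 * Bk * Z) = (k.+1 * X) ^ 2 * (Bk * k.+1) * ((2 * j + 1) * Z))%N by ring.
  have -> : (j.+1 ^ 3 * (2 * k + 1) * (Y ^ 2 * Zk * B) = (j.+1 * Y) ^ 2 * ((2 * k + 1) * Zk) * (B * j.+1))%N by ring.
  rewrite h1 h2 h3. ring.
Qed.

Lemma fD_small n k : (n < k)%N -> fD n k = 0%N.
Proof. by move=> h; rewrite /fD bin_small. Qed.

Lemma rowR m k : ((m.+1)%:R - k%:R) ^+ 3 * (fD m.+1 k)%:R
   = 2 * (m.+1)%:R ^+ 2 * (2 * m%:R + 1 - 2 * k%:R) * (fD m k)%:R :> rat.
Proof.
  case: (leqP k m) => hk.
  - have [j ->] : exists j, m = (k + j)%N by exists (m - k)%N; lia.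
    move: (row_nat k j). generalize (fD (k + j).+1 k) (fD (k + j) k) => F1 F0 H0.
    have := congr1 (fun t : nat => t%:R : rat) H0.
    rewrite ?natrM ?natrX ?natrD ?natrM => H.
    have ex1 : ((k + j).+1%:R : rat) = k%:R + j%:R + 1 by rewrite -addn1 !natrD.
    have ex2 : (j.+1%:R : rat) = j%:R + 1 by rewrite -addn1 !natrD.
    rewrite ?ex1 ?ex2 in H *. rewrite ?natrD. lra.
  - rewrite (fD_small hk). case: (leqP k m.+1) => hk2.
    + have -> : k = m.+1 by lia. by rewrite subrr expr0n /= !mul0r mulr0.
    + by rewrite (fD_small hk2) !mulr0.
Qed.

Lemma colR m k : (k%:R + 1) ^+ 3 * (2 * m%:R - 2 * k%:R - 1) * (fD m k.+1)%:R
   = (m%:R - k%:R) ^+ 3 * (2 * k%:R + 1) * (fD m k)%:R :> rat.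
Proof.
  case: (ltnP k m) => hk.
  - have [j ->] : exists j, m = (k + j.+1)%N by exists (m - k.+1)%N; lia.
    move: (col_nat k j). generalize (fD (k + j.+1) k.+1) (fD (k + j.+1) k) => F1 F0 H0.
    have := congr1 (fun t : nat => t%:R : rat) H0.
    rewrite ?natrM ?natrX ?natrD ?natrM => H.
    have ex1 : ((k + j.+1)%:R : rat) = k%:R + j%:R + 1 by rewrite -addn1 !natrD; ring.
    have ex2 : (j.+1%:R : rat) = j%:R + 1 by rewrite -addn1 !natrD.
    have ex3 : (k.+1%:R : rat) = k%:R + 1 by rewrite -addn1 !natrD.
    rewrite ?ex1 ?ex2 ?ex3 in H *. rewrite ?natrD. lra.
  - have h1 : (m < k.+1)%N by lia. rewrite (fD_small h1) mulr0.
    case: (leqP k m) => hk2.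
    + have -> : k = m by lia. by rewrite subrr expr0n /= !mul0r.
    + by rewrite (fD_small hk2) !mulr0.
Qed.

Definition Mp (n k : rat) : rat :=
  -224 + 296 * k - 120 * k^+2 + 16 * k^+3
  + n * (-864 + 948 * k - 312 * k^+2 + 32 * k^+3)
  + n^+2 * (-1304 + 1112 * k - 264 * k^+2 + 16 * k^+3)
  + n^+3 * (-960 + 564 * k - 72 * k^+2)
  + n^+4 * (-344 + 104 * k) - 48 * n^+5.

Lemma key (n k X X1 f1 f0 : rat)
  (hA : 2 * n + 3 - 2 * k != 0) (hB : 2 * n + 1 - 2 * k != 0)
  (h1 : n + 1 != 0) (h2 : n + 2 != 0) (hk : k + 1 != 0)
  (R1 : (n + 2 - k) ^+ 3 * X = 2 * (n + 2) ^+ 2 * (2 * n + 3 - 2 * k) * f1)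
  (R0 : (n + 1 - k) ^+ 3 * f1 = 2 * (n + 1) ^+ 2 * (2 * n + 1 - 2 * k) * f0)
  (C : (k + 1) ^+ 3 * (2 * n + 3 - 2 * k) * X1 = (n + 2 - k) ^+ 3 * (2 * k + 1) * X) :
  (n + 2) ^+ 3 * X - 2 * (2 * n + 3) * (5 * n ^+ 2 + 15 * n + 12) * f1 + 64 * (n + 1) ^+ 3 * f0
  = X1 * (k + 1) ^+ 3 * Mp n (k + 1) / (4 * (n + 1) ^+ 2 * (n + 2) ^+ 2 * (2 * n + 1 - 2 * k))
    - X * k ^+ 3 * Mp n k / (4 * (n + 1) ^+ 2 * (n + 2) ^+ 2 * (2 * n + 3 - 2 * k)).
Proof.
  have ef0 : f0 = (n + 1 - k) ^+ 3 * f1 / (2 * (n + 1) ^+ 2 * (2 * n + 1 - 2 * k)).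
    by rewrite R0; field; rewrite ?hA ?hB ?h1 ?h2 ?hk.
  have ef1 : f1 = (n + 2 - k) ^+ 3 * X / (2 * (n + 2) ^+ 2 * (2 * n + 3 - 2 * k)).
    by rewrite R1; field; rewrite ?hA ?hB ?h1 ?h2 ?hk.
  have eX1 : X1 = (n + 2 - k) ^+ 3 * (2 * k + 1) * X / ((k + 1) ^+ 3 * (2 * n + 3 - 2 * k)).
    by rewrite -C; field; rewrite ?hA ?hB ?h1 ?h2 ?hk.
  rewrite eX1 ef0 ef1 /Mp. field. by rewrite hA hB h1 h2 hk.
Qed.

Definition Gt (n k : nat) : rat := (fD n.+2 k)%:R * (k%:R) ^+ 3 * Mp n%:R k%:R /
  (4 * (n%:R + 1) ^+ 2 * (n%:R + 2) ^+ 2 * (2 * n%:R + 3 - 2 * k%:R)).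

Lemma natr_sub_neq0 (a b : nat) : a <> b -> (a%:R - b%:R : rat) != 0.
Proof. move=> h; rewrite subr_eq0 eqr_nat; apply/eqP; exact: h. Qed.

Lemma termG n k :
  (n%:R + 2) ^+ 3 * (fD n.+2 k)%:R - 2 * (2 * n%:R + 3) * (5 * n%:R ^+ 2 + 15 * n%:R + 12) * (fD n.+1 k)%:R
  + 64 * (n%:R + 1) ^+ 3 * (fD n k)%:R = Gt n k.+1 - Gt n k.
Proof.
  have en1 : (n.+1%:R : rat) = n%:R + 1 by rewrite -addn1 natrD.
  have en2 : (n.+2%:R : rat) = n%:R + 2 by rewrite -addn2 natrD.
  have ek1 : (k.+1%:R : rat) = k%:R + 1 by rewrite -addn1 natrD.
  have e2 : 2 * n%:R + 3 - 2 * (k%:R + 1) = 2 * n%:R + 1 - 2 * k%:R :> rat by ring.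
  rewrite /Gt ek1 e2.
  have hA : 2 * n%:R + 3 - 2 * k%:R != 0 :> rat.
    have -> : 2 * n%:R + 3 - 2 * k%:R = ((2 * n + 3)%N%:R - (2 * k)%N%:R) :> rat by rewrite ?natrD ?natrM; ring.
    apply: natr_sub_neq0; lia.
  have hB : 2 * n%:R + 1 - 2 * k%:R != 0 :> rat.
    have -> : 2 * n%:R + 1 - 2 * k%:R = ((2 * n + 1)%N%:R - (2 * k)%N%:R) :> rat by rewrite ?natrD ?natrM; ring.
    apply: natr_sub_neq0; lia.
  have h1 : n%:R + 1 != 0 :> rat by rewrite -en1 pnatr_eq0.
  have h2 : n%:R + 2 != 0 :> rat by rewrite -en2 pnatr_eq0.
  have hk : k%:R + 1 != 0 :> rat by rewrite -ek1 pnatr_eq0.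
  apply: key => //.
  - have := rowR n.+1 k; rewrite en2 en1 => R; rewrite R; ring.
  - have := rowR n k; rewrite en1 => R; rewrite R; ring.
  - have := colR n.+2 k; rewrite en2 => R.
    have -> : 2 * n%:R + 3 - 2 * k%:R = 2 * (n%:R + 2) - 2 * k%:R - 1 :> rat by ring.
    exact: R.
Qed.

Lemma dombE n : domb n = (\sum_(0 <= k < n.+1) fD n k)%N.
Proof. by []. Qed.

Lemma domb_widen n p : domb n = (\sum_(0 <= k < n.+1 + p) fD n k)%N.
Proof.
  rewrite dombE; elim: p => [|p IH]; first by rewrite addn0.
  rewrite addnS [in RHS]big_nat_recr //= [in RHS]fD_small; last by lia.
  by rewrite addn0.
Qed.

Lemma domb_rec_rat n :
  (n%:R + 2) ^+ 3 * (domb n.+2)%:R - 2 * (2 * n%:R + 3) * (5 * n%:R ^+ 2 + 15 * n%:R + 12) * (domb n.+1)%:R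
  + 64 * (n%:R + 1) ^+ 3 * (domb n)%:R = 0 :> rat.
Proof.
  rewrite (domb_widen n.+2 0) (domb_widen n.+1 1) (domb_widen n 2).
  have e1 : (n.+3 + 0 = n.+3)%N by lia. have e2 : (n.+2 + 1 = n.+3)%N by lia.
  have e3 : (n.+1 + 2 = n.+3)%N by lia.
  rewrite e1 e2 e3 !natr_sum !mulr_sumr -sumrB -big_split /=.
  rewrite (eq_big_nat _ _ (F2 := fun k => Gt n k.+1 - Gt n k)); last by move=> k _; exact: termG.
  rewrite telescope_sumr //.
  rewrite /Gt fD_small // expr0n /= !mulr0 !mul0r subrr //.
Qed.

Lemma domb_rec n : ((n + 2) ^ 3 * domb n.+2 + 64 * (n + 1) ^ 3 * domb n
   = 2 * (2 * n + 3) * (5 * n ^ 2 + 15 * n + 12) * domb n.+1)%N.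
Proof.
  apply/eqP; rewrite -(eqr_nat rat). have := domb_rec_rat n.
  rewrite ?natrD ?natrM ?natrX. move=> H. apply/eqP. lra.
Qed.

Lemma domb_pos n : (0 < domb n)%N.
Proof.
  rewrite dombE big_nat_recl // /fD !bin0 subn0 exp1n !mul1n.
  have : (0 < 'C(2 * n, n))%N by rewrite bin_gt0; lia.
  lia.
Qed.

Lemma expn_pow m n : (m ^ n)%N = Nat.pow m n.
Proof. elim: n => [|n IH] //. by rewrite expnS IH. Qed.

Module Glue.
From Stdlib Require Import Reals.
Import PartB.
Local Close Scope ring_scope. Local Open Scope R_scope.

Lemma domb_recR : recR (fun n => INR (domb n)).
Proof.
  intros n. pose proof (domb_rec n) as H.
  rewrite !expn_pow -!multE -!plusE in H.
  apply (f_equal INR) in H.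
  repeat rewrite ?plus_INR ?mult_INR ?pow_INR in H.
  simpl (fun n => INR (domb n)).
  set A := domb n.+2 in H *. set B := domb n.+1 in H *. set C := domb n in H *.
  clearbody A B C. simpl INR in H. Stdlib.micromega.Lra.lra.
Qed.

Lemma domb_posR n : 0 < INR (domb n).
Proof. apply lt_0_INR. have := domb_pos n. lia. Qed.

Lemma nat_ineq k : (Nat.pow (domb (S k)) 4 * Nat.pow (domb (S (S (S k)))) 4
   <= domb k * domb (S (S (S (S k)))) * Nat.pow (domb (S (S k))) 6)%coq_nat.
Proof.
  have e0 : domb 0 = 1%nat by rewrite /domb unlock.
  have e1 : domb 1 = 4%nat by rewrite /domb unlock.
  have d0 : INR (domb 0) = 1 by rewrite e0; reflexivity.
  have d1 : INR (domb 1) = 4 by rewrite e1; simpl; Stdlib.micromega.Lra.lra.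
  have R := mainR (fun n => INR (domb n)) domb_posR domb_recR d0 d1 k.
  cbv beta in R. rewrite -!pow_INR -!mult_INR in R.
  apply INR_le. exact R.
Qed.
End Glue.

Theorem proposition2p15 :
  forall n : nat, (1 <= n)%N ->
    domb_y n.-1 * domb_y n.+1 >= domb_y n ^+ 2.
Proof.
  move=> [|k] // _.
  have H := Glue.nat_ineq k.
  have H' : (domb k.+1 ^ 4 * domb k.+3 ^ 4 <= domb k * domb k.+4 * domb k.+2 ^ 6)%N.
    by apply/ssrnat.leP; rewrite !expn_pow; exact: H.
  have Hp := domb_pos.
  rewrite /domb_y /=.
  have pb : (domb k.+1)%:R != 0 :> rat by rewrite pnatr_eq0 -lt0n.
  have pc : (domb k.+2)%:R != 0 :> rat by rewrite pnatr_eq0 -lt0n.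
  have pe : (domb k.+3)%:R != 0 :> rat by rewrite pnatr_eq0 -lt0n.
  have E : (domb k.+2)%:R * (domb k)%:R / (domb k.+1)%:R ^+ 2 *
      ((domb k.+4)%:R * (domb k.+2)%:R / (domb k.+3)%:R ^+ 2)
      - ((domb k.+3)%:R * (domb k.+1)%:R / (domb k.+2)%:R ^+ 2) ^+ 2
      = ((domb k)%:R * (domb k.+4)%:R * (domb k.+2)%:R ^+ 6 - (domb k.+1)%:R ^+ 4 * (domb k.+3)%:R ^+ 4)
        / ((domb k.+1)%:R ^+ 2 * (domb k.+3)%:R ^+ 2 * (domb k.+2)%:R ^+ 4) :> rat.
    field. by rewrite pb pc pe.
  rewrite -subr_ge0 E. apply: divr_ge0.
  - by rewrite subr_ge0 -!natrX -!natrM ler_nat.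
  - by rewrite !mulr_ge0 // exprn_ge0 // ler0n.
Qed.
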